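(* Fix $\mathbf{x}'\in\Omega$ and suppose $\lambda\neq1$. Then $$\inf_{\mathbf{F}\in\mathbb{R}^{3\times2},\ \det(\mathbf{F}^T\mathbf{F})=1} W_{3D}\big((\mathbf{x}',0),[\mathbf{F},\mathbf{b}(\mathbf{F})]\big)>0,$$ where for $\mathbf{F}=[\mathbf{F}_1,\mathbf{F}_2]$, $\mathbf{b}(\mathbf{F})=\frac{\mathbf{F}_1\times\mathbf{F}_2}{|\mathbf{F}_1\times\mathbf{F}_2|^2}$ and $[\mathbf{F},\mathbf{b}(\mathbf{F})]\in\mathbb{R}^{3\times3}$ has columns $\mathbf{F}_1,\mathbf{F}_2,\mathbf{b}(\mathbf{F})$.
   Context: Let $\Omega\subset\mathbb{R}^2$ be a bounded Lipschitz domain. At the point $\mathbf{x}'$ we are given scalars $s,s_0$ with $-1<s,s_0<\infty$ and a unit vector $\mathbf{m}\in\mathbb{S}^1\subset\mathbb{R}^2$, identified with $(\mathbf{m},0)^T\in\mathbb{R}^3$ when needed; $\lambda=\big(\tfrac{s+1}{s_0+1}\big)^{1/3}$. For $\mathbf{G}\in\mathbb{R}^{3\times3}$ with $\mathbf{G}\mathbf{m}\neq0$, set $\mathbf{n}=\mathbf{G}\mathbf{m}/|\mathbf{G}\mathbf{m}|$, $\mathbf{L}_{\mathbf{m}}=(s_0+1)^{-1/3}(\mathrm{Id}_3+s_0\,\mathbf{m}\otimes\mathbf{m})$, $\mathbf{L}_{\mathbf{n}}=(s+1)^{-1/3}(\mathrm{Id}_3+s\,\mathbf{n}\otimes\mathbf{n})$,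 and $$W_{3D}\big((\mathbf{x}',0),\mathbf{G}\big)=\operatorname{tr}\big(\mathbf{G}^T\mathbf{L}_{\mathbf{n}}^{-1}\mathbf{G}\mathbf{L}_{\mathbf{m}}\big)-3 .$$ *)

(* Defs.v *)
From HB Require Import structures.
From mathcomp Require Import all_boot all_order all_algebra.
From mathcomp Require Import all_classical all_reals all_analysis.
Set Implicit Arguments. Unset Strict Implicit. Unset Printing Implicit Defensive.
Import Order.TTheory GRing.Theory Num.Theory.
Local Open Scope ring_scope.

Section Defs.
Variable R : realType.

Definition vnorm3 (v : 'cV[R]_3) : R := Num.sqrt (\sum_(i < 3) v i 0 ^+ 2).

Definition cross3 (u v : 'cV[R]_3) : 'cV[R]_3 :=
  \col_(i < 3)
    (if (i == 0 :> nat) then u 1 0 * v 2 0 - u 2 0 * v 1 0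
     else if (i == 1 :> nat) then u 2 0 * v 0 0 - u 0 0 * v 2 0
     else u 0 0 * v 1 0 - u 1 0 * v 0 0).

Definition embed3 (m : 'cV[R]_2) : 'cV[R]_3 :=
  \col_(i < 3) (if (i < 2)%N then m (inord i) 0 else 0).

Definition bvec (F : 'M[R]_(3,2)) : 'cV[R]_3 :=
  let c := cross3 (col 0 F) (col 1 F) in (vnorm3 c ^+ 2)^-1 *: c.

Definition augment (F : 'M[R]_(3,2)) : 'M[R]_3 :=
  \matrix_(i < 3, j < 3)
    (if (j == 0 :> nat) then F i 0 else if (j == 1 :> nat) then F i 1
     else bvec F i 0).

Definition Lmat (s : R) (v : 'cV[R]_3) : 'M[R]_3 :=
  ((s + 1) `^ (- (1 / 3))) *: (1%:M + s *: (v *m v^T)).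

(* W_3D((x',0),G) with s = s(x'), s0 = s0(x'), m = m(x') *)
Definition W3D (s s0 : R) (m : 'cV[R]_2) (G : 'M[R]_3) : R :=
  let Gm := G *m embed3 m in
  let n := (vnorm3 Gm)^-1 *: Gm in
  \tr (G^T *m invmx (Lmat s n) *m G *m Lmat s0 (embed3 m)) - 3.

End Defs.

(* Main.v *)
Require Import Defs.
From HB Require Import structures.
From mathcomp Require Import all_boot all_order all_algebra.
From mathcomp Require Import all_classical all_reals all_analysis.
From mathcomp Require Import ring lra.
Import Order.TTheory GRing.Theory Num.Theory.
Local Open Scope ring_scope.

Set Implicit Arguments. Unset Strict Implicit.

Section Aux.
Variable R : realType.

Lemma mxZr' m n p (c : R) (X : 'M[R]_(m,n)) (Y : 'M[R]_(n,p)) : X *m (c *: Y) = c *: (X *m Y).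
Proof.
by apply/matrixP=> i j; rewrite !mxE mulr_sumr; apply: eq_bigr => k _; rewrite !mxE mulrCA.
Qed.
Lemma mxZl' m n p (c : R) (X : 'M[R]_(m,n)) (Y : 'M[R]_(n,p)) : (c *: X) *m Y = c *: (X *m Y).
Proof.
by apply/matrixP=> i j; rewrite !mxE mulr_sumr; apply: eq_bigr => k _; rewrite !mxE mulrA.
Qed.
Lemma trZ' m n (c : R) (X : 'M[R]_(m,n)) : (c *: X)^T = c *: X^T.
Proof. by apply/matrixP=> i j; rewrite !mxE. Qed.
Lemma trM' m n p (X : 'M[R]_(m,n)) (Y : 'M[R]_(n,p)) : (X *m Y)^T = Y^T *m X^T.
Proof. by apply/matrixP=> i j; rewrite !mxE; apply: eq_bigr => k _; rewrite !mxE mulrC. Qed.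
Lemma trC' m n (X : 'M[R]_(m,n)) (Y : 'M[R]_(n,m)) : \tr (X *m Y) = \tr (Y *m X).
Proof. exact: mxtrace_mulC. Qed.

Lemma tr1 (A : 'M[R]_1) : A = (\tr A)%:M.
Proof. by rewrite {1}[A]mx11_scalar /mxtrace big_ord1. Qed.

Lemma trB' n (A B : 'M[R]_n) : \tr (A - B) = \tr A - \tr B.
Proof. by rewrite /mxtrace -sumrB; apply: eq_bigr => i _; rewrite !mxE. Qed.
Lemma trD' n (A B : 'M[R]_n) : \tr (A + B) = \tr A + \tr B.
Proof. by rewrite /mxtrace -big_split; apply: eq_bigr => i _; rewrite !mxE. Qed.
Lemma trZ'' n c (A : 'M[R]_n) : \tr (c *: A) = c * \tr A.
Proof. by rewrite /mxtrace mulr_sumr; apply: eq_bigr => i _; rewrite !mxE. Qed.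

Lemma T4gen (G : 'M[R]_3) (e v : 'cV[R]_3) : G *m e = v ->
  \tr (G^T *m (v *m v^T) *m G *m (e *m e^T)) = \tr (v^T *m v) ^+ 2.
Proof.
move=> Hv.
set t := \tr (v^T *m v).
have ht : v^T *m v = t%:M by exact: tr1.
rewrite !mulmxA -(mulmxA _ G e) Hv -(mulmxA (G^T *m v) v^T v) ht mul_mx_scalar mxZl' trZ''.
by rewrite (trC' (G^T *m v)) mulmxA -trM' Hv -/t expr2.
Qed.

Lemma T2gen (G : 'M[R]_3) (e v : 'cV[R]_3) : G *m e = v ->
  \tr (G^T *m G *m (e *m e^T)) = \tr (v^T *m v).
Proof. move=> Hv; rewrite mulmxA trC' -Hv trM' ?mulmxA; reflexivity. Qed.

Lemma T3gen (G : 'M[R]_3) (v : 'cV[R]_3) :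
  \tr (G^T *m (v *m v^T) *m G) = \tr ((G^T *m v)^T *m (G^T *m v)).
Proof. by rewrite (trM' (G^T) v) trmxK (trC' _ G) !mulmxA (trC' _ v^T) !mulmxA. Qed.

Lemma trace_red (G : 'M[R]_3) (e v : 'cV[R]_3) (al be ka s0 w : R) : G *m e = v ->
  \tr (G^T *m (al *: (1%:M - ka *: ((w *: v) *m (w *: v)^T))) *m G
        *m (be *: (1%:M + s0 *: (e *m e^T))))
  = al * be * (\tr (G^T *m G) + s0 * \tr (v^T *m v)
       - ka * w^+2 * \tr ((G^T *m v)^T *m (G^T *m v))
       - ka * s0 * w^+2 * \tr (v^T *m v) ^+ 2).
Proof.
move=> Hv.
have -> : (w *: v) *m (w *: v)^T = w^+2 *: (v *m v^T) by rewrite trZ' mxZl' mxZr' scalerA -expr2.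
rewrite scalerA.
rewrite (mxZr' al (G^T)).
set k := ka * w^+2.
rewrite (mxZl' al _ G) (mxZl' al _ (be *: _)) (mxZr' be) !mxtraceZ.
rewrite mulmxBr mulmx1 mulmxBl mulmxBl mulmxDr mulmxDr !mulmx1.
rewrite (mxZr' s0 (G^T *m G)) (mxZr' k (G^T)) (mxZl' k _ G) (mxZl' k _ (s0 *: _)) (mxZr' s0).
rewrite !trB' !trD' !trZ''.
rewrite (T2gen Hv) (T4gen Hv) T3gen /k; ring.
Qed.
Lemma inv_L (s g : R) (n : 'cV[R]_3) : n^T *m n = 1%:M -> 1+s != 0 -> g != 0 ->
  invmx (g *: (1%:M + s *: (n *m n^T))) = g^-1 *: (1%:M - (s/(1+s)) *: (n *m n^T)).
Proof.
move=> nn s1 g0.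
set A := g *: _; set B := _ *: _.
have AB : A *m B = 1%:M.
  rewrite /A /B -scalemxAl mxZr' scalerA mulfV // scale1r.
  have PP : (n *m n^T) *m (n *m n^T) = n *m n^T by rewrite mulmxA -(mulmxA n) nn mulmx1.
  rewrite mulmxDl !mulmxDr !mul1mx !mulmx1 mulmxN -scalemxAl mxZr' PP scalerA.
  set P := n *m n^T.
  have -> : 1%:M - (s / (1 + s)) *: P + (s *: P - (s * (s / (1 + s))) *: P)
     = 1%:M + (s - s * (s / (1 + s)) - (s / (1 + s))) *: P.
    by apply/matrixP=> i j; rewrite !mxE; ring.
  have -> : s - s * (s / (1 + s)) - (s / (1 + s)) = 0 by field.
  by rewrite scale0r addr0.
have [Au _] := mulmx1_unit AB.
by rewrite -[invmx A]mulmx1 -AB mulmxA mulVmx // mul1mx.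
Qed.

End Aux.




Section Aux2.
Variable R : realType.

Lemma sum3 (f : 'I_3 -> R) : \sum_i f i = f 0 + f 1 + f 2.
Proof. by rewrite !big_ord_recr big_ord0 /= add0r; congr (f _ + f _ + f _); apply/val_inj. Qed.
Lemma sum2 (f : 'I_2 -> R) : \sum_i f i = f 0 + f 1.
Proof. by rewrite !big_ord_recr big_ord0 /= add0r; congr (f _ + f _); apply/val_inj. Qed.

Lemma det2 (A : 'M[R]_2) : \det A = A 0 0 * A 1 1 - A 0 1 * A 1 0.
Proof.
rewrite (expand_det_row A 0) sum2 /cofactor !det_mx11 !mxE /=.
have -> : lift 0 0 = 1 :> 'I_2 by apply/val_inj.
have -> : lift 1 0 = 0 :> 'I_2 by apply/val_inj.
have -> : (0 + 1 %% 2 = 1)%N by [].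
ring.
Qed.

Lemma embedE (m : 'cV[R]_2) (i : 'I_3) : embed3 m i 0 =
  if i == 0 then m 0 0 else if i == 1 then m 1 0 else 0.
Proof.
rewrite /embed3 mxE.
case: i => [[|[|[|k]]] Hi] //=.
- by congr (m _ 0); apply/val_inj; rewrite /= inordK.
- by congr (m _ 0); apply/val_inj; rewrite /= inordK.
Qed.


Lemma vE (F : 'M[R]_(3,2)) (m : 'cV[R]_2) (i : 'I_3) :
  (augment F *m embed3 m) i 0 = F i 0 * m 0 0 + F i 1 * m 1 0.
Proof. rewrite mxE sum3 !embedE !mxE /=. ring. Qed.

Lemma trvv (v : 'cV[R]_3) : \tr (v^T *m v) = v 0 0 ^+ 2 + v 1 0 ^+ 2 + v 2 0 ^+ 2.
Proof. rewrite /mxtrace big_ord1 mxE sum3 !mxE. ring. Qed.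

Lemma trGG (G : 'M[R]_3) : \tr (G^T *m G) =
  (G 0 0 ^+ 2 + G 1 0 ^+ 2 + G 2 0 ^+ 2) + (G 0 1 ^+ 2 + G 1 1 ^+ 2 + G 2 1 ^+ 2)
  + (G 0 2 ^+ 2 + G 1 2 ^+ 2 + G 2 2 ^+ 2).
Proof. rewrite /mxtrace sum3 !mxE !sum3 !mxE. ring. Qed.

Lemma GtvE (G : 'M[R]_3) (v : 'cV[R]_3) j : (G^T *m v) j 0 = G 0 j * v 0 0 + G 1 j * v 1 0 + G 2 j * v 2 0.
Proof. by rewrite mxE sum3 !mxE. Qed.

Lemma bE (F : 'M[R]_(3,2)) (i : 'I_3) :
  vnorm3 (cross3 (col 0 F) (col 1 F)) ^+ 2 = 1 ->
  bvec F i 0 = cross3 (col 0 F) (col 1 F) i 0.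
Proof. by move=> h; rewrite /bvec mxE h invr1 mul1r. Qed.

Lemma augE (F : 'M[R]_(3,2)) (i : 'I_3) :
  [/\ augment F i 0 = F i 0, augment F i 1 = F i 1 & augment F i 2 = bvec F i 0].
Proof. by rewrite !mxE. Qed.

End Aux2.




Lemma scalar_ineq (R : realType) (s s0 al be t N Q X : R) :
  -1 < s -> 0 < N -> 0 < be -> 0 < t -> al^+3 = 1+s -> be^+3 = 1+s0 -> t^+2 = al/be ->
  N*X = Q+1 -> N^+2 <= Q ->
  2/t + t^+2 - 3 <= al * be^-1 * (X + 1 + s0*N - s/(1+s) * N^-1 * Q - s/(1+s)*s0*N^-1*N^+2) - 3.
Proof.
move=> hs hN hbe ht hal hbe3 ht2 hX hQ.
have s1 : 0 < 1 + s by lra.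
have N0 : N != 0 by rewrite gt_eqF.
have s10 : 1 + s != 0 by rewrite gt_eqF.
have be0 : be != 0 by rewrite gt_eqF.
have t0 : t != 0 by rewrite gt_eqF.
have hal' : al = t^+2 * be by rewrite ht2 divfK.
have hX' : X = (Q+1)/N by rewrite -hX; field.
have hK : X + 1 + s0*N - s/(1+s) * N^-1 * Q - s/(1+s)*s0*N^-1*N^+2
   = (Q/N + s0 * N)/(1+s) + 1/N + 1 by rewrite hX'; field; apply/andP.
rewrite hK.
have hQN : N <= Q/N by rewrite ler_pdivlMr // -expr2.
have h1 : (1+s0) * N / (1+s) <= (Q/N + s0 * N)/(1+s).
  by rewrite ler_pM2r ?invr_gt0 //; lra.
have hpos : 0 < al * be^-1 by rewrite hal' mulfK // exprn_gt0.
have h2 : al * be^-1 * ((1+s0) * N / (1+s) + 1/N + 1) <= al * be^-1 * ((Q/N + s0 * N)/(1+s) + 1/N + 1).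
  by rewrite ler_pM2l //; lra.
apply: le_trans (lerB h2 (lexx 3)).
have -> : al * be^-1 * ((1+s0) * N / (1+s) + 1/N + 1) = N / t^+4 + t^+2/N + t^+2.
  rewrite -hbe3 -hal hal'; field; rewrite t0 be0 N0 //.
have h3 : 2/t <= N / t^+4 + t^+2/N.
  rewrite -subr_ge0.
  have -> : N / t^+4 + t^+2/N - 2/t = (N - t^+3)^+2 / (t^+4 * N) by field; rewrite t0 N0.
  by rewrite divr_ge0 ?sqr_ge0 // mulr_ge0 // ?exprn_ge0 // ltW.
lra.
Qed.



Theorem lemma2p5 (R : realType) (s s0 : R) (m : 'cV[R]_2) :
  -1 < s -> -1 < s0 -> (m^T *m m) 0 0 = 1 ->
  ((s + 1) / (s0 + 1)) `^ (1 / 3) != 1 ->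
  exists c : R, 0 < c /\
    forall F : 'M[R]_(3,2), \det (F^T *m F) = 1 ->
      c <= W3D s s0 m (augment F).
Proof.
move=> hs hs0 hm hl.
have a_pos : 0 < s + 1 by lra.
have a0_pos : 0 < s0 + 1 by lra.
have cube (x : R) : 0 < x -> (x `^ (1/3)) ^+ 3 = x.
  move=> hx; rewrite -powR_mulrn ?powR_ge0 // -powRrM.
  have -> : 1/3 * 3%:R = 1 :> R by field.
  by rewrite powRr1 // ltW.
set al := (s+1) `^ (1/3).
set be := (s0+1) `^ (1/3).
have al_pos : 0 < al by apply: powR_gt0.
have be_pos : 0 < be by apply: powR_gt0.
have ne : al != be.
  apply/negP => /eqP E; move: hl.
  have -> : s + 1 = s0 + 1 by rewrite -(cube _ a_pos) -(cube _ a0_pos) -/al -/be E.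
  by rewrite divff ?(gt_eqF a0_pos) // powR_eq1 eqxx.
set t := Num.sqrt (al / be).
have t2 : t^+2 = al/be by rewrite sqr_sqrtr // divr_ge0 // ltW.
have tpos : 0 < t by rewrite sqrtr_gt0 divr_gt0.
have t1 : t != 1.
  apply/eqP => Et; move/eqP: ne; apply.
  by rewrite -[al](divfK (negbT (gt_eqF be_pos))) -t2 Et expr1n mul1r.
exists (2/t + t^+2 - 3); split.
  have -> : 2/t + t^+2 - 3 = (t-1)^+2 * (t+2) / t by field; rewrite gt_eqF.
  rewrite divr_gt0 // mulr_gt0 //; last by lra.
  by rewrite exprn_even_gt0 //= subr_eq0.
move=> F hdet.
have hm' : m 0 0 ^+ 2 + m 1 0 ^+ 2 = 1 by rewrite -hm mxE sum2 !mxE; ring.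
move: hdet; rewrite det2 !mxE !sum3 !mxE => hdet.
have hc : vnorm3 (cross3 (col 0 F) (col 1 F)) ^+ 2 = 1.
  rewrite /vnorm3 sqr_sqrtr; last by apply: sumr_ge0 => i _; exact: sqr_ge0.
  rewrite sum3 /cross3 !mxE /= -hdet; ring.
rewrite /W3D /=.
set G := augment F. set e := embed3 m. set v := G *m e.
set w := (vnorm3 v)^-1.
have vi : forall i, v i 0 = F i 0 * m 0 0 + F i 1 * m 1 0 by move=> i; exact: vE.
set N := \tr (v^T *m v).
pose xx (i : 'I_3) := F i 0. pose yy (i : 'I_3) := F i 1.
pose vv (i : 'I_3) := F i 0 * m 0 0 + F i 1 * m 1 0.
pose cc (i : 'I_3) := cross3 (col 0 F) (col 1 F) i 0.
pose d3 (a b : 'I_3 -> R) := a 0 * b 0 + a 1 * b 1 + a 2 * b 2.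
have hN : N = d3 vv vv by rewrite /N trvv !vi /d3 /vv; ring.
have hvn : vnorm3 v = Num.sqrt N by rewrite /vnorm3 sum3 /N trvv.
have N_ge0 : 0 <= N by rewrite /N trvv; rewrite !addr_ge0 // sqr_ge0.
have hw : w^+2 = N^-1 by rewrite /w hvn exprVn sqr_sqrtr.
have hNX : N * (d3 xx xx + d3 yy yy) = d3 xx vv ^+ 2 + d3 yy vv ^+ 2 + 1.
  have : N * (d3 xx xx + d3 yy yy) - (d3 xx vv ^+ 2 + d3 yy vv ^+ 2) =
    ((F 0 0 ^+ 2 + F 1 0 ^+ 2 + F 2 0 ^+ 2) * (F 0 1 ^+ 2 + F 1 1 ^+ 2 + F 2 1 ^+ 2) -
     (F 0 0 * F 0 1 + F 1 0 * F 1 1 + F 2 0 * F 2 1) ^+ 2) * (m 0 0 ^+ 2 + m 1 0 ^+ 2).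
    rewrite hN /d3 /xx /yy /vv; ring.
  have -> : (F 0 0 ^+ 2 + F 1 0 ^+ 2 + F 2 0 ^+ 2) * (F 0 1 ^+ 2 + F 1 1 ^+ 2 + F 2 1 ^+ 2) -
     (F 0 0 * F 0 1 + F 1 0 * F 1 1 + F 2 0 * F 2 1) ^+ 2 = 1 by rewrite -hdet; ring.
  by rewrite hm' mulr1 => h; rewrite -h; ring.
have hQN : N ^+ 2 <= d3 xx vv ^+ 2 + d3 yy vv ^+ 2.
  have : (d3 xx vv ^+ 2 + d3 yy vv ^+ 2) * (m 0 0 ^+ 2 + m 1 0 ^+ 2) - N ^+ 2 =
     (d3 xx vv * m 1 0 - d3 yy vv * m 0 0) ^+ 2 by rewrite hN /d3 /xx /yy /vv; ring.
  by rewrite hm' mulr1 => h; rewrite -subr_ge0 h sqr_ge0.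
have Npos : 0 < N.
  rewrite lt_neqAle N_ge0 andbT; apply/eqP => N0.
  move: hNX; rewrite -N0 mul0r => h.
  have : 0 < d3 xx vv ^+ 2 + d3 yy vv ^+ 2 + 1 by rewrite ltr_pwDr // addr_ge0 // sqr_ge0.
  by rewrite -h ltxx.
have hcc : d3 cc cc = 1.
  rewrite -hc /vnorm3 sqr_sqrtr; last by apply: sumr_ge0 => i _; exact: sqr_ge0.
  rewrite sum3 /d3 /cc; ring.
have hcv : d3 cc vv = 0 by rewrite /d3 /cc /vv /cross3 !mxE /=; ring.
have nn : (w *: v)^T *m (w *: v) = 1%:M.
  have sv : forall i, (w *: v) i 0 = w * v i 0 by move=> i; rewrite mxE.
  rewrite [LHS]tr1 trvv !sv; congr (_%:M).
  have -> : (w * v 0 0) ^+ 2 + (w * v 1 0) ^+ 2 + (w * v 2 0) ^+ 2 = w^+2 * N by rewrite /N trvv; ring.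
  by rewrite hw mulVf // gt_eqF.
rewrite /Lmat (inv_L nn); last 2 first.
- by rewrite gt_eqF // addrC.
- by rewrite gt_eqF // powR_gt0.
rewrite !powRN invrK -/al -/be.
rewrite (trace_red _ _ _ _ _ (erefl v)).
have hT : \tr (G^T *m G) = d3 xx xx + d3 yy yy + 1.
  rewrite -hcc trGG /G !mxE /= hc invr1 !mul1r /d3 /xx /yy /cc /cross3 !mxE /=; ring.
have hQ : \tr ((G^T *m v)^T *m (G^T *m v)) = d3 xx vv ^+2 + d3 yy vv ^+2.
  have -> : d3 xx vv ^+2 + d3 yy vv ^+2 = d3 xx vv ^+2 + d3 yy vv ^+2 + d3 cc vv ^+ 2.
    by rewrite hcv expr0n /= addr0.
  rewrite trvv !GtvE !vi /G !mxE /= hc invr1 !mul1r /d3 /xx /yy /vv /cc /cross3 !mxE /=; ring.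
rewrite hT hQ -/N hw.
apply: scalar_ineq => //.
- by rewrite addrC cube.
- by rewrite addrC cube.
Qed.
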